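(* Let $\tilde{\mathcal D}$ be a finite set of examples, let $\mathrm{sim}:\tilde{\mathcal D}\times\tilde{\mathcal D}\to\mathbb{R}$, let $C:\tilde{\mathcal D}\to[0,\infty)$, let $\tau\ge 0$, and let $\sigma:[0,\infty)\to\mathbb{R}$ be non-decreasing and concave with $\sigma(0)=0$. For $\mathcal S\subseteq\tilde{\mathcal D}$ and $x_i\in\tilde{\mathcal D}$ define $$\hat C_{\mathcal N}(x_i;\mathcal S)=\sum_{x_j\in\mathcal S}\mathbb 1_{[\mathrm{sim}(x_i,x_j)\ge\tau]}\,\mathrm{sim}(x_i,x_j)\,C(x_j),\qquad OBJ(\mathcal S)=\sum_{x_i\in\tilde{\mathcal D}}\sigma\big(\hat C_{\mathcal N}(x_i;\mathcal S)\big).$$ Then $OBJ$ is submodular: for all $\mathcal S\subset\mathcal S'\subseteq\tilde{\mathcal D}$ and all $x\in\tilde{\mathcal D}\setminus\mathcal S'$, $$OBJ(\mathcal S\cup\{x\})-OBJ(\mathcal S)\ge OBJ(\mathcal S'\cup\{x\})-OBJ(\mathcal S').$$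
   Context: In the paper, $\mathrm{sim}$ is the cosine similarity between embeddings of augmentations of two examples, $C$ is a prediction confidence (e.g. maximum softmax probability), $\tau$ is a neighborhood threshold and $\sigma$ is a utility function (e.g. the positive part of $\tanh$). *)

(* Defs.v *)
From mathcomp Require Import all_boot all_order all_algebra.
Set Implicit Arguments. Unset Strict Implicit. Unset Printing Implicit Defensive.
Import Order.TTheory GRing.Theory Num.Theory.
Local Open Scope ring_scope.

Definition CN (R : realFieldType) (T : finType) (sim : T -> T -> R) (C : T -> R)
  (tau : R) (S : {set T}) (xi : T) : R :=
  \sum_(xj in S) (if tau <= sim xi xj then 1 else 0) * sim xi xj * C xj.

Definition OBJ (R : realFieldType) (T : finType) (sim : T -> T -> R) (C : T -> R)
  (tau : R) (sigma : R -> R) (S : {set T}) : R :=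
  \sum_(xi : T) sigma (CN sim C tau S xi).

Definition nondecr_nonneg (R : realFieldType) (sigma : R -> R) : Prop :=
  forall x y : R, 0 <= x -> x <= y -> sigma x <= sigma y.

Definition concave_nonneg (R : realFieldType) (sigma : R -> R) : Prop :=
  forall (x y t : R), 0 <= x -> 0 <= y -> 0 <= t -> t <= 1 ->
    t * sigma x + (1 - t) * sigma y <= sigma (t * x + (1 - t) * y).

(* Main.v *)
Require Import Defs.
From mathcomp Require Import all_boot all_order all_algebra.
From mathcomp Require Import ring lra.
Import Order.TTheory GRing.Theory Num.Theory.
Local Open Scope ring_scope.

Lemma dimret (R : realFieldType) (sigma : R -> R)
  (hconc : concave_nonneg sigma) (a b d : R) :
  0 <= a -> a <= b -> 0 <= d ->
  sigma (b + d) - sigma b <= sigma (a + d) - sigma a.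
Proof.
move=> ha hab hd.
have [->|dn0] := eqVneq d 0; first by rewrite !addr0 !subrr.
have dp : 0 < d by rewrite lt_def dn0 hd.
have hp : 0 < b - a + d by rewrite ltr_wpDl // subr_ge0.
set t := d / (b - a + d).
have t0 : 0 <= t by rewrite divr_ge0 // ltW.
have t1 : t <= 1 by rewrite ler_pdivrMr // mul1r lerDr subr_ge0.
have hbd : 0 <= b + d by rewrite addr_ge0 // (le_trans ha hab).
have E1 : t * a + (1 - t) * (b + d) = b.
  rewrite /t; field; by rewrite gt_eqF.
have E2 : (1 - t) * a + t * (b + d) = a + d.
  rewrite /t; field; by rewrite gt_eqF.
have c1 := hconc _ _ _ ha hbd t0 t1.
have t1' : 0 <= 1 - t by rewrite subr_ge0.
have t1'' : 1 - t <= 1 by rewrite lerBlDr lerDl.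
have c2 := hconc _ _ _ ha hbd t1' t1''.
rewrite E1 in c1. have E2' : (1 - t) * a + (1 - (1 - t)) * (b + d) = a + d by rewrite -E2; ring.
rewrite E2' in c2.
have key : sigma a + sigma (b + d) = (t * sigma a + (1 - t) * sigma (b + d))
   + ((1 - t) * sigma a + (1 - (1 - t)) * sigma (b + d)) by ring.
lra.
Qed.

Theorem lemma6 (R : realFieldType) (T : finType) (sim : T -> T -> R) (C : T -> R)
  (tau : R) (sigma : R -> R)
  (hC : forall x, 0 <= C x) (htau : 0 <= tau)
  (hmono : nondecr_nonneg sigma) (hconc : concave_nonneg sigma)
  (h0 : sigma 0 = 0)
  (S S' : {set T}) (x : T) (hSS' : S \subset S') (hx : x \notin S') :
  OBJ sim C tau sigma (x |: S') - OBJ sim C tau sigma S'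
    <= OBJ sim C tau sigma (x |: S) - OBJ sim C tau sigma S.
Proof.
set w := fun i j => (if tau <= sim i j then 1 else 0) * sim i j * C j.
have w0 : forall i j, 0 <= w i j.
  move=> i j; rewrite /w; case: ifP => h; last by rewrite !mul0r.
  by rewrite mul1r mulr_ge0 // (le_trans htau h).
have hxS : x \notin S by apply: contra hx; apply: (subsetP hSS').
have CNU : forall A : {set T}, x \notin A -> forall i,
    CN sim C tau (x |: A) i = w i x + CN sim C tau A i.
  by move=> A hA i; rewrite /CN big_setU1.
have CN0 : forall A i, 0 <= CN sim C tau A i.
  by move=> A i; rewrite /CN; apply: sumr_ge0 => j _; exact: w0.
have CNle : forall i, CN sim C tau S i <= CN sim C tau S' i.
  move=> i; rewrite /CN [X in _ <= X](big_setID S) /=.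
  rewrite (setIidPr hSS') lerDl sumr_ge0 //.
  by move=> j _; exact: w0.
rewrite /OBJ -!sumrB; apply: ler_sum => i _.
rewrite !CNU // [w i x + CN _ _ _ S i]addrC [w i x + _]addrC.
exact: dimret.
Qed.
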